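(* Let $S=\{0,1,2,\dots\}$, $\lambda,\mu>0$, $\theta=\lambda/\mu$, and let $p^*_t(x,y)$ be the unique transition function on $S$ whose infinitesimal rates are $q(i,i+1)=\lambda$; $q(i,i+k)=0$ for $k\ge 2$; $q(i,i-k)=\mu$ for $i\ge1$, $1\le k\le i$; $q(i,i)=-(\lambda+i\mu)$; all other entries $0$ (equivalently, the minimal solution of the Kolmogorov backward equations for these rates, which is stochastic). For $t\ge0$, $x,n\in S$ define $$R^*_t(\delta_x,n)=\frac{\theta^n}{(\theta+1)_n}+e^{-(\theta+n)\mu t}\sum_{\rho=0}^{n}\frac{(\theta(e^{\mu t}-1))^\rho}{\rho!}\Big(\mathbf 1\{x\ge n-\rho\}-\frac{\theta^{n-\rho}}{(\theta+1)_{n-\rho}}\Big).$$ Then for all $x,y\in S$ and $t\ge0$, $$p^*_t(x,y)=R^*_t(\delta_x,y)-R^*_t(\delta_x,y+1).$$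
   Context: $(a)_n$ is the rising factorial: $(a)_0=1$, $(a)_n=a(a+1)\cdots(a+n-1)$ for $n\ge1$. *)

(* Defs.v *)
From Stdlib Require Import Reals Lra Lia Factorial.
From Coquelicot Require Import Coquelicot.
Open Scope R_scope.

Fixpoint rising (a : R) (n : nat) : R :=
  match n with
  | O => 1
  | S k => rising a k * (a + INR k)
  end.

Definition qrate (lam mu : R) (i j : nat) : R :=
  if Nat.eqb j (S i) then lam
  else if Nat.ltb j i then mu
  else if Nat.eqb j i then - (lam + INR i * mu)
  else 0.

Definition is_transition_function (P : R -> nat -> nat -> R) : Prop :=
  (forall t x y, 0 <= t -> 0 <= P t x y) /\
  (forall t x, 0 <= t -> is_series (fun y => P t x y) 1) /\
  (forall x y, P 0 x y = if Nat.eqb x y then 1 else 0) /\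
  (forall s t x y, 0 <= s -> 0 <= t ->
     is_series (fun z => P s x z * P t z y) (P (s + t) x y)).

Definition has_rates (q : nat -> nat -> R) (P : R -> nat -> nat -> R) : Prop :=
  forall x y,
    filterlim (fun h => (P h x y - P 0 x y) / h) (at_right 0) (locally (q x y)).

Definition Rstar (lam mu t : R) (x n : nat) : R :=
  let theta := lam / mu in
  theta ^ n / rising (theta + 1) n
  + exp (- (theta + INR n) * mu * t) *
    sum_f_R0 (fun r =>
       (theta * (exp (mu * t) - 1)) ^ r / INR (fact r) *
       ((if Nat.leb (n - r) x then 1 else 0)
        - theta ^ (n - r) / rising (theta + 1) (n - r))) n.

(* Main.v *)
Require Import Defs.
From Stdlib Require Import Reals Lra Lia Factorial ZArith.
From Coquelicot Require Import Coquelicot.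
Open Scope R_scope.

Lemma partial_mono (a b : nat -> R) (K : nat) :
  (forall z, 0 <= a z <= b z) -> forall j,
  0 <= sum_f_R0 a (K + j) - sum_f_R0 a K <=
  sum_f_R0 b (K + j) - sum_f_R0 b K.
Proof.
  intros Hab j; induction j.
  - rewrite Nat.add_0_r; lra.
  - rewrite Nat.add_succ_r, !tech5. specialize (Hab (S (K+j))). lra.
Qed.

Lemma tail_le (a b : nat -> R) (A B : R) :
  is_series a A -> is_series b B -> (forall z, 0 <= a z <= b z) ->
  forall K, 0 <= A - sum_f_R0 a K <= B - sum_f_R0 b K.
Proof.
  intros HA HB Hab K.
  apply is_series_Reals in HA. apply is_series_Reals in HB.
  assert (Hgen : forall eps, eps > 0 ->
     0 <= A - sum_f_R0 a K + 2*eps /\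
     A - sum_f_R0 a K <= B - sum_f_R0 b K + 2*eps).
  { intros eps Heps.
    destruct (HA eps Heps) as [N1 H1]. destruct (HB eps Heps) as [N2 H2].
    set (N := (K + (N1 + N2))%nat).
    assert (h1 := H1 N ltac:(unfold N; lia)).
    assert (h2 := H2 N ltac:(unfold N; lia)).
    unfold Rdist in h1, h2.
    apply Rabs_def2 in h1. apply Rabs_def2 in h2.
    assert (hm := partial_mono a b K Hab (N1 + N2)).
    fold N in hm. lra. }
  split.
  - apply Rnot_lt_le; intro Hc.
    destruct (Hgen (-(A - sum_f_R0 a K)/4)) as [h _]; lra.
  - apply Rnot_lt_le; intro Hc.
    destruct (Hgen (((A - sum_f_R0 a K) - (B - sum_f_R0 b K))/4)) as [_ h]; lra.
Qed.


Definition rlim (f : R -> R) (l : R) : Prop :=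
  forall eps, 0 < eps -> exists d, 0 < d /\
    forall h, 0 < h < d -> Rabs (f h - l) < eps.

Lemma rlim_of_filterlim f l :
  filterlim f (at_right 0) (locally l) -> rlim f l.
Proof.
  intros H eps Heps.
  apply filterlim_locally with (eps := mkposreal eps Heps) in H.
  destruct H as [d Hd]. exists d. split; [apply cond_pos|].
  intros h [h0 h1].
  assert (HH : ball l (mkposreal eps Heps) (f h)).
  { apply (Hd h).
    - unfold ball; simpl; unfold AbsRing_ball, abs, minus, plus, opp; simpl.
      rewrite Ropp_0, Rplus_0_r, Rabs_pos_eq; lra.
    - exact h0. }
  revert HH. unfold ball; simpl; unfold AbsRing_ball, abs, minus, plus, opp; simpl.
  auto.
Qed.

Lemma rlim_ext f g l : (forall h, 0 < h -> f h = g h) -> rlim f l -> rlim g l.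
Proof.
  intros E H eps He. destruct (H eps He) as [d [d0 Hd]]. exists d; split; auto.
  intros h Hh. rewrite <- E by lra. auto.
Qed.

Lemma rlim_const c : rlim (fun _ => c) c.
Proof. intros eps He; exists 1; split; [lra|]; intros; rewrite Rminus_diag, Rabs_R0; lra. Qed.

Lemma rlim_plus f g l m : rlim f l -> rlim g m -> rlim (fun h => f h + g h) (l + m).
Proof.
  intros Hf Hg eps He.
  destruct (Hf (eps/2) ltac:(lra)) as [d1 [d10 H1]].
  destruct (Hg (eps/2) ltac:(lra)) as [d2 [d20 H2]].
  exists (Rmin d1 d2); split; [apply Rmin_pos; auto|].
  intros h [h0 h1]. 
  assert (a1 := H1 h (conj h0 (Rlt_le_trans _ _ _ h1 (Rmin_l _ _)))).
  assert (a2 := H2 h (conj h0 (Rlt_le_trans _ _ _ h1 (Rmin_r _ _)))).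
  replace (f h + g h - (l + m)) with ((f h - l) + (g h - m)) by ring.
  eapply Rle_lt_trans; [apply Rabs_triang|]. lra.
Qed.

Lemma rlim_scal k f l : rlim f l -> rlim (fun h => k * f h) (k * l).
Proof.
  intros Hf eps He.
  destruct (Hf (eps / (Rabs k + 1))) as [d [d0 Hd]].
  { apply Rdiv_lt_0_compat; auto. pose proof (Rabs_pos k); lra. }
  exists d; split; auto. intros h Hh.
  replace (k * f h - k * l) with (k * (f h - l)) by ring.
  rewrite Rabs_mult. specialize (Hd h Hh).
  pose proof (Rabs_pos k). pose proof (Rabs_pos (f h - l)).
  apply Rle_lt_trans with ((Rabs k + 1) * Rabs (f h - l)). nra.
  apply Rmult_lt_compat_l with (r := Rabs k + 1) in Hd; [|lra].
  replace ((Rabs k + 1) * (eps / (Rabs k + 1))) with eps in Hd by (field; lra). lra.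
Qed.

Lemma rlim_opp f l : rlim f l -> rlim (fun h => - f h) (- l).
Proof.
  intros H. replace (- l) with (-1 * l) by ring.
  eapply rlim_ext; [|apply (rlim_scal (-1) f l H)].
  intros; simpl; ring.
Qed.

Lemma rlim_minus f g l m : rlim f l -> rlim g m -> rlim (fun h => f h - g h) (l - m).
Proof. intros; apply rlim_plus; auto; apply rlim_opp; auto. Qed.

Lemma rlim_sum (f : nat -> R -> R) (l : nat -> R) K :
  (forall z, (z <= K)%nat -> rlim (f z) (l z)) ->
  rlim (fun h => sum_f_R0 (fun z => f z h) K) (sum_f_R0 l K).
Proof.
  induction K; intros H; simpl.
  - apply H; lia.
  - apply rlim_plus; [apply IHK; intros; apply H; lia| apply H; lia].
Qed.

Lemma rlim_squeeze f g : rlim g 0 ->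
  (exists d, 0 < d /\ forall h, 0 < h < d -> 0 <= f h <= g h) -> rlim f 0.
Proof.
  intros Hg [d0 [d00 Hd0]] eps He.
  destruct (Hg eps He) as [d [dp Hd]].
  exists (Rmin d d0); split; [apply Rmin_pos; auto|].
  intros h [h0 h1].
  assert (a1 := Hd h (conj h0 (Rlt_le_trans _ _ _ h1 (Rmin_l _ _)))).
  assert (a2 := Hd0 h (conj h0 (Rlt_le_trans _ _ _ h1 (Rmin_r _ _)))).
  rewrite Rminus_0_r in *. rewrite Rabs_pos_eq in * by lra. lra.
Qed.


Lemma term_le_sum (a : nat -> R) K : (forall z, 0 <= a z) -> a K <= sum_f_R0 a K.
Proof.
  intros H; destruct K; simpl; [lra|].
  pose proof (cond_pos_sum a K H). lra.
Qed.

Lemma P_le_1 P : is_transition_function P -> forall t x y, 0 <= t -> P t x y <= 1.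
Proof.
  intros [Hpos [Hsum _]] t x y Ht.
  assert (T := tail_le (fun z => P t x z) (fun z => P t x z) 1 1 (Hsum t x Ht) (Hsum t x Ht)
     ltac:(intros; split; [apply Hpos; auto| lra]) y).
  pose proof (term_le_sum (fun z => P t x z) y ltac:(intros; apply Hpos; auto)). simpl in *. lra.
Qed.

Lemma sum_delta (f : nat -> R) K x : (x <= K)%nat ->
  sum_f_R0 (fun z => (if Nat.eqb x z then 1 else 0) * f z) K = f x.
Proof.
  induction K; intros Hx.
  - assert (x = 0%nat) by lia; subst; simpl; ring.
  - destruct (Nat.eq_dec x (S K)) as [->|Hne].
    + rewrite tech5, Nat.eqb_refl.
      rewrite (sum_eq _ (fun _ => 0)).
      * rewrite sum_cte; ring.
      * intros i Hi. destruct (Nat.eqb_spec (S K) i); [lia| ring].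
    + rewrite tech5, IHK by lia. destruct (Nat.eqb_spec x (S K)); [lia|ring].
Qed.

Lemma qrate_lt lam mu x z : (z < x)%nat -> qrate lam mu x z = mu.
Proof.
  intros H; unfold qrate.
  destruct (Nat.eqb_spec z (S x)); [lia|].
  destruct (Nat.ltb_spec z x); [auto|lia].
Qed.

Lemma sum_qrate_lt lam mu x K : (K < x)%nat ->
  sum_f_R0 (fun z => qrate lam mu x z) K = INR (S K) * mu.
Proof.
  induction K; intros H.
  - simpl. rewrite qrate_lt by lia; ring.
  - rewrite tech5, IHK by lia. rewrite qrate_lt by lia. rewrite (S_INR (S K)); ring.
Qed.

Lemma conservative lam mu x : sum_f_R0 (fun z => qrate lam mu x z) (S x) = 0.
Proof.
  rewrite tech5.
  assert (E1 : qrate lam mu x (S x) = lam).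
  { unfold qrate; rewrite Nat.eqb_refl; auto. }
  assert (E2 : qrate lam mu x x = - (lam + INR x * mu)).
  { unfold qrate. destruct (Nat.eqb_spec x (S x)); [lia|].
    destruct (Nat.ltb_spec x x); [lia|]. rewrite Nat.eqb_refl; auto. }
  rewrite E1. destruct x.
  - simpl. rewrite E2. simpl; ring.
  - rewrite tech5, sum_qrate_lt by lia. rewrite E2. ring.
Qed.

Lemma rlim_scalr k f l : rlim f l -> rlim (fun h => f h * k) (l * k).
Proof.
  intros H; rewrite Rmult_comm. eapply rlim_ext; [|apply (rlim_scal k f l H)].
  intros; simpl; ring.
Qed.

Lemma backward lam mu P : is_transition_function P -> has_rates (qrate lam mu) P ->
  forall x y t, 0 <= t ->
  rlim (fun h => (P (t+h) x y - P t x y)/h)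
       (sum_f_R0 (fun z => qrate lam mu x z * P t z y) (S x)).
Proof.
  intros HP Hr x y t Ht.
  pose proof HP as [Hpos [Hsum [H0 HCK]]].
  assert (Hle1 := P_le_1 P HP).
  assert (Hq : forall z, rlim (fun h => (P h x z - P 0 x z)/h) (qrate lam mu x z)).
  { intros z. apply rlim_of_filterlim, Hr. }
  set (K := S x).
  assert (HPt : P t x y = sum_f_R0 (fun z => P 0 x z * P t z y) K).
  { rewrite (sum_eq _ (fun z => (if Nat.eqb x z then 1 else 0) * P t z y)).
    - rewrite sum_delta; auto. unfold K; lia.
    - intros i _. rewrite H0; auto. }
  assert (HS1 : sum_f_R0 (fun z => P 0 x z) K = 1).
  { rewrite (sum_eq _ (fun z => (if Nat.eqb x z then 1 else 0) * 1)).
    - rewrite sum_delta; auto. unfold K; lia.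
    - intros i _. rewrite H0; ring. }
  assert (Lmain : rlim (fun h => sum_f_R0 (fun z => (P h x z - P 0 x z)/h * P t z y) K)
                  (sum_f_R0 (fun z => qrate lam mu x z * P t z y) K)).
  { apply rlim_sum. intros z _. apply rlim_scalr, Hq. }
  assert (Lg : rlim (fun h => - sum_f_R0 (fun z => (P h x z - P 0 x z)/h) K) 0).
  { assert (L := rlim_opp _ _ (rlim_sum (fun z h => (P h x z - P 0 x z)/h) (fun z => qrate lam mu x z) K
              ltac:(intros; apply Hq))).
    unfold K in L |- *; rewrite conservative, Ropp_0 in L. exact L. }
  assert (Ltail : rlim (fun h => (P (h + t) x y - sum_f_R0 (fun z => P h x z * P t z y) K)/h) 0).
  { apply rlim_squeeze with (1 := Lg). exists 1; split; [lra|].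
    intros h [h0 h1].
    assert (T := tail_le (fun z => P h x z * P t z y) (fun z => P h x z) _ _
               (HCK h t x y ltac:(lra) Ht) (Hsum h x ltac:(lra))).
    assert (T' := T ltac:(intros z; split;
       [apply Rmult_le_pos; apply Hpos; lra |
        rewrite <- Rmult_1_r; apply Rmult_le_compat_l; [apply Hpos; lra| apply Hle1; lra]]) K).
    clear T; cbv beta in T'.
    assert (E : - sum_f_R0 (fun z => (P h x z - P 0 x z) / h) K
             = (1 - sum_f_R0 (fun z => P h x z) K) / h).
    { rewrite (sum_eq _ (fun z => (P h x z - P 0 x z) * /h)) by (intros; reflexivity).
      rewrite <- scal_sum, minus_sum. replace (sum_f_R0 (P 0 x) K) with 1 by (rewrite <- HS1; reflexivity). change (sum_f_R0 (P h x) K) with (sum_f_R0 (fun z => P h x z) K). field. lra. }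
    rewrite E. split.
    - apply Rmult_le_pos; [lra| left; apply Rinv_0_lt_compat; lra].
    - apply Rmult_le_compat_r; [left; apply Rinv_0_lt_compat; lra| lra]. }
  assert (L := rlim_plus _ _ _ _ Lmain Ltail).
  rewrite Rplus_0_r in L. revert L. apply rlim_ext.
  intros h h0. rewrite (Rplus_comm h t), HPt.
  rewrite (sum_eq _ (fun z => (P h x z * P t z y - P 0 x z * P t z y) * /h)) by (intros; unfold Rdiv; ring).
  rewrite <- scal_sum, minus_sum. field. lra.
Qed.


Lemma cont_bound P : is_transition_function P -> forall x y t h, 0 <= t -> 0 <= h ->
  Rabs (P (t+h) x y - P t x y) <= 1 - P h x x.
Proof.
  intros HP x y t h Ht Hh.
  pose proof HP as [Hpos [Hsum [H0 HCK]]].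
  assert (Hle1 := P_le_1 P HP).
  assert (Hab : forall z, 0 <= P h x z * P t z y <= P h x z).
  { intros z; split; [apply Rmult_le_pos; apply Hpos; lra |
        rewrite <- Rmult_1_r; apply Rmult_le_compat_l; [apply Hpos; lra| apply Hle1; lra]]. }
  assert (T := tail_le _ _ _ _ (HCK h t x y Hh Ht) (Hsum h x Hh) Hab x).
  cbv beta in T.
  assert (M : 0 <= P (h+t) x y - P h x x * P t x y <= 1 - P h x x).
  { destruct x as [|x'].
    - simpl in T. exact T.
    - rewrite !tech5 in T.
      assert (Hs := sum_Rle (fun z => P h (S x') z * P t z y) (fun z => P h (S x') z) x'
                 ltac:(intros; apply Hab)).
      cbv beta in Hs.
      assert (Hp := cond_pos_sum (fun z => P h (S x') z * P t z y) x' ltac:(intros; apply Hab)).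
      cbv beta in Hp. lra. }
  rewrite (Rplus_comm t h).
  assert (0 <= P t x y <= 1) by (split; [apply Hpos| apply Hle1]; lra).
  assert (P h x x <= 1) by (apply Hle1; lra).
  apply Rabs_le. nra.
Qed.

Lemma Pxx_lim lam mu P : has_rates (qrate lam mu) P -> (forall x y, P 0 x y = if Nat.eqb x y then 1 else 0) ->
  forall x, rlim (fun h => P h x x) 1.
Proof.
  intros Hr H0 x.
  assert (Hq := rlim_of_filterlim _ _ (Hr x x)). cbv beta in Hq.
  rewrite H0, Nat.eqb_refl in Hq.
  set (q := qrate lam mu x x) in *.
  destruct (Hq 1 ltac:(lra)) as [d [d0 Hd]].
  intros eps He.
  assert (Hq1 : 0 < Rabs q + 1) by (pose proof (Rabs_pos q); lra).
  exists (Rmin d (eps / (Rabs q + 1))); split.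
  { apply Rmin_pos; auto. apply Rdiv_lt_0_compat; lra. }
  intros h [h0 h1].
  assert (hd : h < d) by (eapply Rlt_le_trans; [exact h1| apply Rmin_l]).
  assert (he : h < eps / (Rabs q + 1)) by (eapply Rlt_le_trans; [exact h1| apply Rmin_r]).
  specialize (Hd h (conj h0 hd)).
  assert (E : P h x x - 1 = h * ((P h x x - 1)/h - q) + h * q) by (field; lra).
  rewrite E. eapply Rle_lt_trans; [apply Rabs_triang|].
  rewrite !Rabs_mult, (Rabs_pos_eq h) by lra.
  apply Rlt_le_trans with (h * (Rabs q + 1)).
  { nra. }
  apply Rmult_lt_compat_r with (r := Rabs q + 1) in he; [|lra].
  replace (eps / (Rabs q + 1) * (Rabs q + 1)) with eps in he by (field; lra). lra.
Qed.

Lemma P_cont lam mu P : is_transition_function P -> has_rates (qrate lam mu) P ->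
  forall x y t, 0 <= t -> forall eps, 0 < eps -> exists d, 0 < d /\
    forall s, 0 <= s -> Rabs (s - t) < d -> Rabs (P s x y - P t x y) < eps.
Proof.
  intros HP Hr x y t Ht eps He.
  pose proof HP as [Hpos [Hsum [H0 HCK]]].
  destruct (Pxx_lim lam mu P Hr H0 x eps He) as [d [d0 Hd]].
  exists d; split; auto. intros s Hs Hst.
  destruct (Rtotal_order s t) as [Hlt|[Heq|Hgt]].
  - assert (B := cont_bound P HP x y s (t - s) Hs ltac:(lra)).
    replace (s + (t - s)) with t in B by ring.
    rewrite Rabs_minus_sym. rewrite Rabs_minus_sym, Rabs_pos_eq in Hst by lra.
    specialize (Hd (t - s) ltac:(lra)). apply Rabs_def2 in Hd. lra.
  - subst. rewrite Rminus_diag, Rabs_R0; lra.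
  - assert (B := cont_bound P HP x y t (s - t) Ht ltac:(lra)).
    replace (t + (s - t)) with s in B by ring.
    rewrite Rabs_pos_eq in Hst by lra.
    specialize (Hd (s - t) ltac:(lra)). apply Rabs_def2 in Hd. lra.
Qed.


Fixpoint sumlt (f : nat -> R) (n : nat) : R :=
  match n with O => 0 | S k => sumlt f k + f k end.

Definition Qop (lam mu : R) (f : nat -> R) (x : nat) : R :=
  lam * f (S x) + mu * sumlt f x - (lam + INR x * mu) * f x.

Lemma sum_sumlt f n : sum_f_R0 f n = sumlt f (S n).
Proof. induction n; simpl; [ring|]. rewrite IHn; simpl; ring. Qed.

Lemma sumlt_ext f g n : (forall z, f z = g z) -> sumlt f n = sumlt g n.
Proof. intros H; induction n; simpl; auto. rewrite IHn, H; auto. Qed.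

Lemma sumlt_plus f g n : sumlt (fun z => f z + g z) n = sumlt f n + sumlt g n.
Proof. induction n; simpl; [ring|]. rewrite IHn; ring. Qed.

Lemma sumlt_scal k f n : sumlt (fun z => k * f z) n = k * sumlt f n.
Proof. induction n; simpl; [ring|]. rewrite IHn; ring. Qed.

Lemma sumlt_const k n : sumlt (fun _ => k) n = INR n * k.
Proof. induction n; simpl; [ring|]. rewrite IHn. destruct n; simpl; ring. Qed.

Lemma Qop_ext lam mu f g x : (forall z, f z = g z) -> Qop lam mu f x = Qop lam mu g x.
Proof. intros H; unfold Qop; rewrite (sumlt_ext f g x H), !H; auto. Qed.

Lemma Qop_plus lam mu f g x : Qop lam mu (fun z => f z + g z) x = Qop lam mu f x + Qop lam mu g x.
Proof. unfold Qop; rewrite sumlt_plus; ring. Qed.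

Lemma Qop_scal lam mu k f x : Qop lam mu (fun z => k * f z) x = k * Qop lam mu f x.
Proof. unfold Qop; rewrite sumlt_scal; ring. Qed.

Lemma Qop_const lam mu k x : Qop lam mu (fun _ => k) x = 0.
Proof. unfold Qop; rewrite sumlt_const; ring. Qed.

Lemma Qop_minus lam mu f g x : Qop lam mu (fun z => f z - g z) x = Qop lam mu f x - Qop lam mu g x.
Proof.
  rewrite (Qop_ext _ _ _ (fun z => f z + (-1) * g z)) by (intros; ring).
  rewrite Qop_plus, Qop_scal; ring.
Qed.

Lemma Qop_sum lam mu (g : nat -> nat -> R) n x :
  Qop lam mu (fun z => sum_f_R0 (fun r => g r z) n) x = sum_f_R0 (fun r => Qop lam mu (g r) x) n.
Proof.
  induction n; simpl; auto.
  rewrite Qop_plus, IHn; auto.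
Qed.

Lemma sumlt_qrate lam mu x f K : (K <= x)%nat ->
  sumlt (fun z => qrate lam mu x z * f z) K = mu * sumlt f K.
Proof.
  induction K; intros H; simpl; [ring|].
  rewrite IHK by lia. rewrite qrate_lt by lia. ring.
Qed.

Lemma Qop_of_qrate lam mu f x :
  sum_f_R0 (fun z => qrate lam mu x z * f z) (S x) = Qop lam mu f x.
Proof.
  rewrite sum_sumlt. simpl. rewrite sumlt_qrate by lia.
  assert (E1 : qrate lam mu x (S x) = lam).
  { unfold qrate; rewrite Nat.eqb_refl; auto. }
  assert (E2 : qrate lam mu x x = - (lam + INR x * mu)).
  { unfold qrate. destruct (Nat.eqb_spec x (S x)); [lia|].
    destruct (Nat.ltb_spec x x); [lia|]. rewrite Nat.eqb_refl; auto. }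
  rewrite E1, E2. unfold Qop. ring.
Qed.

Definition indic (k x : nat) : R := if Nat.leb k x then 1 else 0.

Lemma sumlt_indic k x : sumlt (indic k) x = INR (x - k).
Proof.
  induction x; [simpl; auto|]. cbn [sumlt].
  rewrite IHx. unfold indic. destruct (Nat.leb_spec k x).
  - replace (S x - k)%nat with (S (x - k)) by lia. rewrite S_INR; ring.
  - replace (S x - k)%nat with 0%nat by lia. replace (x - k)%nat with 0%nat by lia. simpl; ring.
Qed.

Lemma Q_indic lam mu k x :
  Qop lam mu (indic (S k)) x = lam * indic k x - (lam + INR (S k) * mu) * indic (S k) x.
Proof.
  unfold Qop. rewrite sumlt_indic. unfold indic.
  destruct (Compare_dec.lt_eq_lt_dec x k) as [[H|H]|H].
  - replace (x - S k)%nat with 0%nat by lia.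
    destruct (Nat.leb_spec (S k) (S x)); [lia|].
    destruct (Nat.leb_spec (S k) x); [lia|].
    destruct (Nat.leb_spec k x); [lia|]. simpl; ring.
  - subst. replace (k - S k)%nat with 0%nat by lia.
    destruct (Nat.leb_spec (S k) (S k)); [|lia].
    destruct (Nat.leb_spec (S k) k); [lia|].
    destruct (Nat.leb_spec k k); [|lia]. simpl; ring.
  - rewrite minus_INR by lia.
    destruct (Nat.leb_spec (S k) (S x)); [|lia].
    destruct (Nat.leb_spec (S k) x); [|lia].
    destruct (Nat.leb_spec k x); [|lia]. ring.
Qed.


Lemma rising_pos a k : 0 < a -> 0 < rising a k.
Proof.
  intros Ha; induction k; simpl; [lra|].
  apply Rmult_lt_0_compat; auto. pose proof (pos_INR k); lra.
Qed.

Definition acoef (th : R) (k : nat) : R := th ^ k / rising (th + 1) k.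
Definition ccoef (th : R) (k x : nat) : R := indic k x - acoef th k.

Lemma a_rec th k : 0 < th -> acoef th (S k) * (th + INR (S k)) = th * acoef th k.
Proof.
  intros Hth. unfold acoef. simpl rising.
  assert (0 < rising (th + 1) k) by (apply rising_pos; lra).
  pose proof (pos_INR k). rewrite S_INR. simpl pow. field. split; lra.
Qed.

Lemma c0 th x : ccoef th 0 x = 0.
Proof. unfold ccoef, acoef, indic; simpl. field. Qed.

Lemma Q_c lam mu k x : 0 < lam -> 0 < mu ->
  Qop lam mu (ccoef (lam/mu) (S k)) x =
  mu * ((lam/mu) * ccoef (lam/mu) k x - (lam/mu + INR (S k)) * ccoef (lam/mu) (S k) x).
Proof.
  intros Hl Hm. set (th := lam/mu).
  assert (Hth : 0 < th) by (apply Rdiv_lt_0_compat; auto).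
  unfold ccoef.
  rewrite Qop_minus, Q_indic, Qop_const.
  assert (R := a_rec th k Hth).
  assert (lam = th * mu) by (unfold th; field; lra).
  nra.
Qed.

Lemma sum_scal_l (f : nat -> R) k N : sum_f_R0 (fun i => k * f i) N = k * sum_f_R0 f N.
Proof. induction N; simpl; [auto|]. rewrite IHN; ring. Qed.

Definition Spoly (C : nat -> R) (n : nat) (u : R) : R :=
  sum_f_R0 (fun r => u ^ r / INR (fact r) * C (n - r)%nat) n.

Lemma shift_lemma (C : nat -> R) u m : C 0%nat = 0 ->
  sum_f_R0 (fun r => u ^ r / INR (fact r) * INR r * C (S m - r)%nat) m
  = u * Spoly C m u.
Proof.
  intros HC0. unfold Spoly. destruct m.
  - simpl. rewrite HC0; ring.
  - rewrite decomp_sum by lia. simpl pred.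
    rewrite tech5. rewrite Nat.sub_diag, HC0.
    rewrite Rmult_plus_distr_l, scal_sum.
    simpl (INR 0). match goal with |- ?a + ?s1 = ?s2 + ?b => replace a with 0 by ring; replace b with 0 by ring end. rewrite Rplus_0_l, Rplus_0_r.
    apply sum_eq. intros i Hi.
    replace (S (S m) - S i)%nat with (S m - i)%nat by lia.
    rewrite fact_simpl, mult_INR. simpl pow.
    assert (INR (fact i) <> 0) by apply INR_fact_neq_0.
    assert (INR (S i) <> 0) by (apply not_0_INR; lia).
    field. auto.
Qed.

Lemma key_identity (C QC : nat -> R) (th mu u : R) m :
  C 0%nat = 0 -> QC 0%nat = 0 ->
  (forall k, QC (S k) = mu * (th * C k - (th + INR (S k)) * C (S k))) ->
  sum_f_R0 (fun r => u ^ r / INR (fact r) * QC (S m - r)%nat) (S m)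
  = mu * ((u + th) * Spoly C m u - (th + INR (S m)) * Spoly C (S m) u).
Proof.
  intros HC0 HQ0 HQ.
  assert (Sp1 : Spoly C (S m) u = sum_f_R0 (fun r => u ^ r / INR (fact r) * C (S m - r)%nat) m).
  { unfold Spoly. rewrite tech5, Nat.sub_diag, HC0. ring. }
  rewrite Sp1, tech5, Nat.sub_diag, HQ0, Rmult_0_r, Rplus_0_r.
  rewrite (sum_eq _ (fun r => mu * th * (u ^ r / INR (fact r) * C (m - r)%nat)
       - mu * (th + INR (S m)) * (u ^ r / INR (fact r) * C (S m - r)%nat)
       + mu * (u ^ r / INR (fact r) * INR r * C (S m - r)%nat))).
  2:{ intros i Hi. replace (S m - i)%nat with (S (m - i)) by lia.
      rewrite HQ. replace (INR (S (m - i))) with (INR (S m) - INR i).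
      - ring.
      - rewrite !S_INR, minus_INR by lia. ring. }
  rewrite plus_sum, minus_sum.
  rewrite !sum_scal_l.
  rewrite shift_lemma by auto.
  unfold Spoly. ring.
Qed.


Lemma is_derive_sum (g : nat -> R -> R) (dg : nat -> R) u n :
  (forall r, is_derive (g r) u (dg r)) ->
  is_derive (fun v => sum_f_R0 (fun r => g r v) n) u (sum_f_R0 dg n).
Proof.
  intros H; induction n; simpl; auto.
  apply (is_derive_plus (fun v => sum_f_R0 (fun r => g r v) n) (g (S n))); auto.
Qed.

Lemma dterm i k u : is_derive (fun v => v ^ S i / INR (fact (S i)) * k) u (u ^ i / INR (fact i) * k).
Proof.
  auto_derive; auto.
  change (match i with | 0%nat => 1 | S _ => INR i + 1 end) with (INR (S i)).
  replace (fact i + i * fact i)%nat with (S i * fact i)%nat by ring.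
  rewrite mult_INR.
  assert (INR (fact i) <> 0) by apply INR_fact_neq_0.
  assert (INR (S i) <> 0) by (apply not_0_INR; lia).
  field. auto.
Qed.

Lemma dSpoly C m u : is_derive (Spoly C (S m)) u (Spoly C m u).
Proof.
  apply is_derive_ext with
    (f := fun v => C (S m) + sum_f_R0 (fun i => v ^ S i / INR (fact (S i)) * C (m - i)%nat) m).
  { intros v. unfold Spoly. rewrite (decomp_sum _ (S m)) by lia. simpl pred.
    rewrite Nat.sub_0_r. simpl (v ^ 0). simpl (fact 0). simpl (INR 1). f_equal. field. }
  replace (Spoly C m u) with (0 + Spoly C m u) by ring.
  apply (is_derive_plus (fun _ => C (S m))).
  - auto_derive; auto.
  - unfold Spoly. apply (is_derive_sum (fun i v => v ^ S i / INR (fact (S i)) * C (m - i)%nat)).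
    intros r; apply dterm.
Qed.

Lemma Rstar_form lam mu t x n :
  Rstar lam mu t x n = acoef (lam/mu) n + exp (- (lam/mu + INR n) * mu * t) *
     Spoly (fun k => ccoef (lam/mu) k x) n ((lam/mu) * (exp (mu * t) - 1)).
Proof. reflexivity. Qed.


Lemma Qop_Rstar lam mu t x n :
  Qop lam mu (fun z => Rstar lam mu t z n) x =
  exp (- (lam/mu + INR n) * mu * t) *
  sum_f_R0 (fun r => ((lam/mu) * (exp (mu * t) - 1)) ^ r / INR (fact r) *
                     Qop lam mu (ccoef (lam/mu) (n - r)) x) n.
Proof.
  set (th := lam/mu). set (E := exp (- (th + INR n) * mu * t)).
  set (u := th * (exp (mu * t) - 1)).
  rewrite (Qop_ext _ _ _ (fun z => acoef th n + E * Spoly (fun k => ccoef th k z) n u)).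
  2:{ intros z; reflexivity. }
  rewrite (Qop_plus _ _ (fun _ => acoef th n) (fun z => E * Spoly (fun k => ccoef th k z) n u)).
  rewrite Qop_const, Rplus_0_l, Qop_scal. f_equal.
  unfold Spoly.
  rewrite (Qop_sum _ _ (fun r z => u ^ r / INR (fact r) * ccoef th (n - r) z)).
  apply sum_eq; intros i _. rewrite Qop_scal. reflexivity.
Qed.

Lemma is_derive_val (f : R -> R) x l l' : is_derive f x l -> l = l' -> is_derive f x l'.
Proof. intros H ->; exact H. Qed.

Lemma Rstar_deriv lam mu x n t : 0 < lam -> 0 < mu ->
  is_derive (fun s => Rstar lam mu s x n) t (Qop lam mu (fun z => Rstar lam mu t z n) x).
Proof.
  intros Hl Hm. rewrite Qop_Rstar.
  set (th := lam/mu).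
  assert (Hth : 0 < th) by (apply Rdiv_lt_0_compat; auto).
  assert (QC0 : Qop lam mu (ccoef th 0) x = 0).
  { rewrite (Qop_ext _ _ _ (fun _ => 0)) by (intros; apply c0). apply Qop_const. }
  destruct n as [|m].
  - simpl. rewrite QC0. 
    apply is_derive_ext with (f := fun _ => 1).
    { intros s. unfold Rstar. simpl. unfold ccoef, acoef, indic. simpl. field. }
    replace (exp (- (th + 0) * mu * t) * (1 / 1 * 0)) with 0 by ring.
    auto_derive; auto.
  - assert (QS : forall k, Qop lam mu (ccoef th (S k)) x =
        mu * (th * ccoef th k x - (th + INR (S k)) * ccoef th (S k) x)).
    { intros k; apply Q_c; auto. }
    pose proof (key_identity (fun k => ccoef th k x) (fun k => Qop lam mu (ccoef th k) x) th mu
               (th * (exp (mu * t) - 1)) m (c0 th x) QC0 QS) as KI.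
    cbv beta in KI. rewrite KI. clear KI.
    set (u := fun s => th * (exp (mu * s) - 1)).
    set (E := fun s => exp (- (th + INR (S m)) * mu * s)).
    set (C := fun k => ccoef th k x).
    assert (dE : is_derive E t (- (th + INR (S m)) * mu * E t)).
    { unfold E. generalize (INR (S m)); intros cc. auto_derive; auto. ring. }
    assert (du : is_derive u t (th * mu * exp (mu * t))).
    { unfold u. auto_derive; auto. ring. }
    assert (dS := dSpoly C m (u t)).
    assert (dSu := is_derive_comp (Spoly C (S m)) u t _ _ dS du).
    assert (dP := is_derive_mult E (fun s => Spoly C (S m) (u s)) t _ _ dE dSu
                   ltac:(intros; apply Rmult_comm)).
    assert (dT := is_derive_plus (fun _ => acoef th (S m)) _ t 0 _ ltac:(auto_derive; auto) dP).
    eapply is_derive_val; [eapply is_derive_ext; [|exact dT]|].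
    + intros s. simpl. unfold plus, mult; simpl. rewrite Rstar_form. reflexivity.
    + simpl. unfold plus, mult, scal; simpl. unfold mult; simpl.
      unfold u, E. fold th. change (match m with 0%nat => 1 | S _ => INR m + 1 end) with (INR (S m)). ring.
Qed.


Lemma exists_nat_gt r : exists n : nat, r < INR n.
Proof.
  destruct (archimed r) as [H1 _].
  destruct (Z_lt_le_dec 0 (up r)) as [Hp|Hn].
  - exists (Z.to_nat (up r)). rewrite INR_IZR_INZ, Z2Nat.id by lia. lra.
  - exists 0%nat. simpl. apply IZR_le in Hn. lra.
Qed.

Lemma rlim_of_derive f t l : is_derive f t l -> rlim (fun h => (f (t + h) - f t) / h) l.
Proof.
  intros H. apply is_derive_Reals in H.
  intros eps He. destruct (H eps He) as [d Hd].
  exists d; split; [apply cond_pos|]. intros h [h0 h1].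
  apply Hd; [lra| rewrite Rabs_pos_eq; lra].
Qed.

Lemma cont_of_derive f t l : is_derive f t l ->
  forall eta, 0 < eta -> exists d, 0 < d /\ forall s, Rabs (s - t) < d -> Rabs (f s - f t) < eta.
Proof.
  intros H. apply is_derive_Reals in H.
  assert (C := derivable_continuous_pt f t (exist _ l H)).
  intros eta He. destruct (C eta He) as [d [d0 Hd]].
  exists d; split; auto. intros s Hs.
  destruct (Req_dec s t) as [->|Hne].
  - rewrite Rminus_diag, Rabs_R0; lra.
  - apply (Hd s). split; [split; [exact I| auto]| exact Hs].
Qed.

Lemma sumlt_le f x c : (forall z, (z < x)%nat -> f z <= c) -> sumlt f x <= INR x * c.
Proof.
  induction x; intros H; [simpl; lra|]. cbn [sumlt].
  assert (sumlt f x <= INR x * c) by (apply IHx; intros; apply H; lia).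
  assert (f x <= c) by (apply H; lia).
  rewrite S_INR. lra.
Qed.

Lemma finite_min (Pr : nat -> R -> Prop) N :
  (forall x d d', 0 < d' <= d -> Pr x d -> Pr x d') ->
  (forall x, (x < N)%nat -> exists d, 0 < d /\ Pr x d) ->
  exists d, 0 < d /\ forall x, (x < N)%nat -> Pr x d.
Proof.
  intros Hmono; induction N; intros H.
  - exists 1; split; [lra| intros; lia].
  - destruct IHN as [d1 [d10 H1]]. { intros; apply H; lia. }
    destruct (H N ltac:(lia)) as [d2 [d20 H2]].
    exists (Rmin d1 d2); split; [apply Rmin_pos; auto|].
    intros x Hx. destruct (Nat.eq_dec x N) as [->|Hne].
    + apply Hmono with d2; auto. split; [apply Rmin_pos; auto| apply Rmin_r].
    + apply Hmono with d1; [split; [apply Rmin_pos; auto| apply Rmin_l]| apply H1; lia].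
Qed.


Lemma uniq_main lam mu (D : R -> nat -> R) : 0 < lam -> 0 < mu ->
  (forall x, D 0 x = 0) ->
  (forall t0, 0 <= t0 -> exists B, forall t x, 0 <= t <= t0 -> D t x <= B) ->
  (forall x t, 0 <= t -> forall eps, 0 < eps -> exists d, 0 < d /\
      forall s, 0 <= s -> Rabs (s - t) < d -> Rabs (D s x - D t x) < eps) ->
  (forall x t, 0 <= t -> rlim (fun h => (D (t + h) x - D t x) / h) (Qop lam mu (fun z => D t z) x)) ->
  forall eps, 0 < eps -> forall t0 x0, 0 <= t0 ->
  D t0 x0 <= eps * (INR x0 + 1) * exp (2 * lam * t0).
Proof.
  intros Hl Hm HD0 HB Hc Hd eps He t0 x0 Ht0.
  set (k := 2 * lam).
  set (phi := fun x s => D s x - eps * (INR x + 1) * exp (k * s)).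
  apply Rnot_lt_le; intro Hbad.
  assert (Hphi0 : phi x0 t0 > 0) by (unfold phi; lra).
  assert (Hexp1 : forall s, 0 <= s -> 1 <= exp (k * s)).
  { intros s Hs. rewrite <- exp_0. destruct (Req_dec s 0) as [->|Hne].
    - rewrite Rmult_0_r; lra.
    - left; apply exp_increasing. unfold k. apply Rmult_lt_0_compat; lra. }
  destruct (HB t0 Ht0) as [B HBt].
  destruct (exists_nat_gt (B / eps)) as [N HN].
  assert (Hbig : forall x s, (N <= x)%nat -> 0 <= s <= t0 -> phi x s < 0).
  { intros x s Hx Hs. unfold phi.
    assert (D s x <= B) by (apply HBt; auto).
    assert (INR N <= INR x) by (apply le_INR; auto).
    assert (B < eps * INR N).
    { apply Rmult_lt_compat_l with (r := eps) in HN; auto.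
      replace (eps * (B / eps)) with B in HN by (field; lra). lra. }
    assert (1 <= exp (k * s)) by (apply Hexp1; lra).
    assert (0 <= INR x) by apply pos_INR.
    assert (eps * (INR x + 1) <= eps * (INR x + 1) * exp (k * s)).
    { rewrite <- (Rmult_1_r (eps * (INR x + 1))) at 1.
      apply Rmult_le_compat_l; [nra| auto]. }
    nra. }
  set (Eset := fun s => 0 <= s <= t0 /\ forall s', 0 <= s' <= s -> forall x, phi x s' <= 0).
  assert (HE0 : Eset 0).
  { split; [lra|]. intros s' Hs' x. assert (s' = 0) by lra. subst s'.
    unfold phi. rewrite HD0, Rmult_0_r, exp_0. pose proof (pos_INR x). nra. }
  assert (Hbd : bound Eset) by (exists t0; intros s [Hs _]; lra).
  destruct (completeness Eset Hbd (ex_intro _ 0 HE0)) as [ts [Hub Hlub]].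
  assert (Hts0 : 0 <= ts) by (apply Hub; auto).
  assert (Hts1 : ts <= t0) by (apply Hlub; intros s [Hs _]; lra).
  assert (C1 : forall s, 0 <= s < ts -> forall x, phi x s <= 0).
  { intros s Hs x. apply Rnot_lt_le; intro Hpos.
    assert (Hup : is_upper_bound Eset s).
    { intros e He'. destruct (Rle_or_lt e s) as [|Hlt]; auto.
      destruct He' as [_ He2]. specialize (He2 s ltac:(lra) x). lra. }
    specialize (Hlub s Hup). lra. }
  assert (Hcphi : forall x t, 0 <= t -> forall eta, 0 < eta -> exists d, 0 < d /\
      forall s, 0 <= s -> Rabs (s - t) < d -> Rabs (phi x s - phi x t) < eta).
  { intros x t Ht eta Heta.
    destruct (Hc x t Ht (eta/2) ltac:(lra)) as [d1 [d10 H1]].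
    assert (De : is_derive (fun s => eps * (INR x + 1) * exp (k * s)) t
                   (eps * (INR x + 1) * (k * exp (k * t)))).
    { auto_derive; auto. ring. }
    destruct (cont_of_derive _ _ _ De (eta/2) ltac:(lra)) as [d2 [d20 H2]].
    exists (Rmin d1 d2); split; [apply Rmin_pos; auto|].
    intros s Hs Hst.
    assert (a1 := H1 s Hs (Rlt_le_trans _ _ _ Hst (Rmin_l _ _))).
    assert (a2 := H2 s (Rlt_le_trans _ _ _ Hst (Rmin_r _ _))).
    unfold phi.
    replace (D s x - eps * (INR x + 1) * exp (k * s) - (D t x - eps * (INR x + 1) * exp (k * t)))
      with ((D s x - D t x) - (eps * (INR x + 1) * exp (k * s) - eps * (INR x + 1) * exp (k * t))) by ring.
    eapply Rle_lt_trans; [apply Rabs_triang|]. rewrite Rabs_Ropp. lra. }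
  assert (C2 : forall x, phi x ts <= 0).
  { intros x. destruct (Req_dec ts 0) as [Hz|Hnz].
    - apply HE0; [rewrite Hz; lra].
    - apply Rnot_lt_le; intro Hpos.
      destruct (Hcphi x ts Hts0 (phi x ts) Hpos) as [d [d0 Hd']].
      set (s := Rmax 0 (ts - d/2)).
      assert (Hs0 : 0 <= s) by apply Rmax_l.
      assert (Hs1 : s < ts).
      { unfold s. apply Rmax_lub_lt; lra. }
      assert (Hs2 : ts - d/2 <= s) by apply Rmax_r.
      specialize (Hd' s Hs0 ltac:(rewrite Rabs_left by lra; lra)).
      specialize (C1 s (conj Hs0 Hs1) x).
      apply Rabs_def2 in Hd'. lra. }
  assert (Hts2 : ts < t0).
  { destruct (Req_dec ts t0) as [Heq|]; [|lra]. specialize (C2 x0). rewrite Heq in C2. lra. }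
  assert (C4 : forall x, (x < N)%nat -> exists d, 0 < d /\
               forall s, ts <= s < ts + d -> phi x s <= 0).
  { intros x _.
    destruct (Rlt_or_le (phi x ts) 0) as [Hneg|Hz].
    - destruct (Hcphi x ts Hts0 (- phi x ts) ltac:(lra)) as [d [d0 Hd']].
      exists d; split; auto. intros s Hs.
      specialize (Hd' s ltac:(lra) ltac:(rewrite Rabs_pos_eq by lra; lra)).
      apply Rabs_def2 in Hd'. lra.
    - assert (Hx0 : phi x ts = 0) by (specialize (C2 x); lra).
      set (e := exp (k * ts)).
      assert (He0 : 0 < e) by apply exp_pos.
      assert (Hbnd : forall z, D ts z <= eps * (INR z + 1) * e).
      { intros z. specialize (C2 z). unfold phi in C2. fold e in C2. lra. }
      assert (Hxe : D ts x = eps * (INR x + 1) * e) by (unfold phi in Hx0; fold e in Hx0; lra).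
      assert (HQ : Qop lam mu (fun z => D ts z) x <= lam * eps * e).
      { unfold Qop.
        assert (h1 : lam * D ts (S x) <= lam * (eps * (INR (S x) + 1) * e))
          by (apply Rmult_le_compat_l; [lra| apply Hbnd]).
        assert (h2 : sumlt (fun z => D ts z) x <= INR x * (eps * (INR x + 1) * e)).
        { apply sumlt_le. intros z Hzx. eapply Rle_trans; [apply Hbnd|].
          assert (INR z <= INR x) by (apply le_INR; lia).
          apply Rmult_le_compat_r; [lra|]. apply Rmult_le_compat_l; lra. }
        assert (h3 : mu * sumlt (fun z => D ts z) x <= mu * (INR x * (eps * (INR x + 1) * e)))
          by (apply Rmult_le_compat_l; lra).
        rewrite Hxe. rewrite S_INR in h1.
        assert (Eq : lam * (eps * (INR x + 1 + 1) * e) + mu * (INR x * (eps * (INR x + 1) * e))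
                     - (lam + INR x * mu) * (eps * (INR x + 1) * e) = lam * eps * e) by ring.
        lra. }
      assert (De : is_derive (fun s => eps * (INR x + 1) * exp (k * s)) ts
                   (eps * (INR x + 1) * (k * exp (k * ts)))).
      { auto_derive; auto. ring. }
      assert (Lphi := rlim_minus _ _ _ _ (Hd x ts Hts0) (rlim_of_derive _ _ _ De)).
      set (L := Qop lam mu (fun z => D ts z) x - eps * (INR x + 1) * (k * exp (k * ts))) in Lphi.
      assert (HL : L <= - (lam * eps * e)).
      { unfold L. fold e. unfold k. pose proof (pos_INR x).
        assert (0 <= lam * eps * e * INR x) by (apply Rmult_le_pos; [|lra]; apply Rmult_le_pos; [|lra]; nra).
        nra. }
      assert (Hpos : 0 < lam * eps * e) by (apply Rmult_lt_0_compat; [|auto]; nra).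
      destruct (Lphi (lam * eps * e / 2) ltac:(lra)) as [d [d0 Hd']].
      exists d; split; auto. intros s [Hs1 Hs2].
      destruct (Req_dec s ts) as [->|Hne]; [lra|].
      specialize (Hd' (s - ts) ltac:(lra)). cbv beta in Hd'.
      replace (ts + (s - ts)) with s in Hd' by ring.
      apply Rabs_def2 in Hd'.
      assert (Q : (phi x s - phi x ts) / (s - ts) < 0).
      { unfold phi.
        replace ((D s x - eps * (INR x + 1) * exp (k * s) - (D ts x - eps * (INR x + 1) * exp (k * ts))) / (s - ts))
          with ((D s x - D ts x) / (s - ts) - (eps * (INR x + 1) * exp (k * s) - eps * (INR x + 1) * exp (k * ts)) / (s - ts))
          by (field; lra).
        lra. }
      rewrite Hx0, Rminus_0_r in Q.
      assert (Hsp : 0 < s - ts) by lra.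
      apply Rnot_lt_le; intro Hc'.
      assert (0 < phi x s / (s - ts)) by (apply Rdiv_lt_0_compat; auto).
      lra. }
  destruct (finite_min (fun x d => forall s, ts <= s < ts + d -> phi x s <= 0) N) as [d [d0 Hdall]].
  { intros x d d' Hd' Hp s Hs. apply Hp. lra. }
  { exact C4. }
  set (d' := Rmin d (t0 - ts)).
  assert (Hd'0 : 0 < d') by (apply Rmin_pos; lra).
  assert (HEn : Eset (ts + d'/2)).
  { split.
    - split; [lra|]. assert (d' <= t0 - ts) by apply Rmin_r. lra.
    - intros s' Hs' x.
      assert (Hd'd : d' <= d) by apply Rmin_l.
      assert (Hd't : d' <= t0 - ts) by apply Rmin_r.
      destruct (Rlt_or_le s' ts) as [Hlt|Hge].
      + apply C1; lra.
      + destruct (Nat.lt_ge_cases x N) as [HxN|HxN].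
        * apply Hdall; auto; lra.
        * left; apply Hbig; auto; lra. }
  specialize (Hub _ HEn). lra.
Qed.

Lemma uniq_le lam mu (D : R -> nat -> R) : 0 < lam -> 0 < mu ->
  (forall x, D 0 x = 0) ->
  (forall t0, 0 <= t0 -> exists B, forall t x, 0 <= t <= t0 -> D t x <= B) ->
  (forall x t, 0 <= t -> forall eps, 0 < eps -> exists d, 0 < d /\
      forall s, 0 <= s -> Rabs (s - t) < d -> Rabs (D s x - D t x) < eps) ->
  (forall x t, 0 <= t -> rlim (fun h => (D (t + h) x - D t x) / h) (Qop lam mu (fun z => D t z) x)) ->
  forall t x, 0 <= t -> D t x <= 0.
Proof.
  intros Hl Hm H0 HB Hc Hd t x Ht.
  apply Rnot_lt_le; intro Hpos.
  set (c := (INR x + 1) * exp (2 * lam * t)).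
  assert (Hc0 : 0 < c) by (unfold c; apply Rmult_lt_0_compat; [pose proof (pos_INR x); lra| apply exp_pos]).
  assert (M := uniq_main lam mu D Hl Hm H0 HB Hc Hd (D t x / (2 * c)) ltac:(apply Rdiv_lt_0_compat; lra) t x Ht).
  replace (D t x / (2 * c) * (INR x + 1) * exp (2 * lam * t)) with (D t x / 2) in M
    by (unfold c; field; split; [apply Rgt_not_eq, exp_pos| pose proof (pos_INR x); lra]).
  lra.
Qed.


Lemma cont_pt_of_derive f t l : is_derive f t l -> continuity_pt f t.
Proof. intros H. apply is_derive_Reals in H. exact (derivable_continuous_pt f t (exist _ l H)). Qed.

Lemma is_derive_Rminus (f g : R -> R) t a b :
  is_derive f t a -> is_derive g t b -> is_derive (fun s => f s - g s) t (a - b).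
Proof.
  intros Hf Hg. apply is_derive_Reals in Hf. apply is_derive_Reals in Hg.
  apply is_derive_Reals. exact (derivable_pt_lim_minus f g t a b Hf Hg).
Qed.

Lemma is_derive_Ropp (f : R -> R) t a :
  is_derive f t a -> is_derive (fun s => - f s) t (- a).
Proof.
  intros Hf. apply is_derive_Reals in Hf.
  apply is_derive_Reals. exact (derivable_pt_lim_opp f t a Hf).
Qed.

Lemma Spoly_0 C n : Spoly C n 0 = C n.
Proof.
  unfold Spoly. destruct n.
  - simpl. field.
  - rewrite decomp_sum by lia. simpl pred.
    rewrite (sum_eq _ (fun _ => 0)).
    + rewrite sum_cte, Nat.sub_0_r. simpl. field.
    + intros i _. simpl. unfold Rdiv. rewrite !Rmult_0_l. reflexivity.
Qed.

Lemma Rstar_t0 lam mu z n : Rstar lam mu 0 z n = indic n z.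
Proof.
  rewrite Rstar_form. rewrite !Rmult_0_r, exp_0, Rminus_diag, Rmult_0_r, Spoly_0.
  unfold ccoef. ring.
Qed.

Lemma Rstar_far lam mu t z n : (n <= z)%nat -> Rstar lam mu t z n = Rstar lam mu t n n.
Proof.
  intros Hz. rewrite !Rstar_form. f_equal. f_equal. unfold Spoly.
  apply sum_eq. intros i Hi. f_equal. unfold ccoef, indic.
  destruct (Nat.leb_spec (n - i) z); [|lia].
  destruct (Nat.leb_spec (n - i) n); [|lia]. auto.
Qed.

Lemma finite_max (f : nat -> R -> R) K a b : a <= b ->
  (forall z c, continuity_pt (f z) c) ->
  exists M, forall z t, (z <= K)%nat -> a <= t <= b -> f z t <= M.
Proof.
  intros Hab Hc. induction K.
  - destruct (continuity_ab_maj (f 0%nat) a b Hab ltac:(intros; apply Hc)) as [Mx [HM _]].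
    exists (f 0%nat Mx). intros z t Hz Ht. assert (z = 0%nat) by lia. subst. auto.
  - destruct IHK as [M1 H1].
    destruct (continuity_ab_maj (f (S K)) a b Hab ltac:(intros; apply Hc)) as [Mx [HM _]].
    exists (Rmax M1 (f (S K) Mx)). intros z t Hz Ht.
    destruct (Nat.eq_dec z (S K)) as [->|Hne].
    + eapply Rle_trans; [apply HM; auto| apply Rmax_r].
    + eapply Rle_trans; [apply H1; auto; lia| apply Rmax_l].
Qed.

Theorem mainTheorem3 (lam mu : R) (P : R -> nat -> nat -> R) :
  0 < lam -> 0 < mu ->
  is_transition_function P ->
  has_rates (qrate lam mu) P ->
  forall (x y : nat) (t : R), 0 <= t ->
    P t x y = Rstar lam mu t x y - Rstar lam mu t x (S y).
Proof.
  intros Hl Hm HP Hr x y t Ht.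
  pose proof HP as [Hpos [Hsum [H0 HCK]]].
  assert (Hle1 := P_le_1 P HP).
  set (Fz := fun s z => Rstar lam mu s z y - Rstar lam mu s z (S y)).
  assert (dF : forall z s, is_derive (fun s => Fz s z) s (Qop lam mu (fun w => Fz s w) z)).
  { intros z s. unfold Fz. rewrite Qop_minus.
    apply is_derive_Rminus; apply Rstar_deriv; auto. }
  assert (Ffar : forall s z, (S y <= z)%nat -> Fz s z = Fz s (S y)).
  { intros s z Hz. unfold Fz.
    rewrite (Rstar_far lam mu s z y), (Rstar_far lam mu s z (S y)) by lia.
    rewrite (Rstar_far lam mu s (S y) y) by lia. auto. }
  assert (Fbnd : forall t0, 0 <= t0 -> exists M, forall s z, 0 <= s <= t0 -> Fz s z <= M /\ - Fz s z <= M).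
  { intros t0 Ht0.
    destruct (finite_max (fun z s => Fz s z) (S y) 0 t0 Ht0) as [M1 H1].
    { intros z c. exact (cont_pt_of_derive _ _ _ (dF z c)). }
    destruct (finite_max (fun z s => - Fz s z) (S y) 0 t0 Ht0) as [M2 H2].
    { intros z c. exact (cont_pt_of_derive _ _ _ (is_derive_Ropp _ _ _ (dF z c))). }
    exists (Rmax M1 M2). intros s z Hs.
    destruct (Nat.le_gt_cases z (S y)) as [Hz|Hz].
    - split; [eapply Rle_trans; [apply (H1 z s Hz Hs)| apply Rmax_l]
             |eapply Rle_trans; [apply (H2 z s Hz Hs)| apply Rmax_r]].
    - rewrite Ffar by lia.
      split; [eapply Rle_trans; [apply (H1 (S y) s (le_n _) Hs)| apply Rmax_l]
             |eapply Rle_trans; [apply (H2 (S y) s (le_n _) Hs)| apply Rmax_r]]. }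
  set (Dd := fun s z => P s z y - Fz s z).
  assert (D0 : forall z, Dd 0 z = 0).
  { intros z. unfold Dd, Fz. rewrite !Rstar_t0, H0. unfold indic.
    destruct (Nat.eqb_spec z y) as [->|Hne].
    - rewrite Nat.leb_refl. destruct (Nat.leb_spec (S y) y); [lia|]. ring.
    - destruct (Nat.leb_spec y z); destruct (Nat.leb_spec (S y) z); try lia; ring. }
  assert (Dc : forall z s, 0 <= s -> forall eps, 0 < eps -> exists d, 0 < d /\
      forall s', 0 <= s' -> Rabs (s' - s) < d -> Rabs (Dd s' z - Dd s z) < eps).
  { intros z s Hs eps He.
    destruct (P_cont lam mu P HP Hr z y s Hs (eps/2) ltac:(lra)) as [d1 [d10 H1]].
    destruct (cont_of_derive _ _ _ (dF z s) (eps/2) ltac:(lra)) as [d2 [d20 H2]].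
    exists (Rmin d1 d2); split; [apply Rmin_pos; auto|].
    intros s' Hs' Hss.
    assert (a1 := H1 s' Hs' (Rlt_le_trans _ _ _ Hss (Rmin_l _ _))).
    assert (a2 := H2 s' (Rlt_le_trans _ _ _ Hss (Rmin_r _ _))).
    unfold Dd.
    replace (P s' z y - Fz s' z - (P s z y - Fz s z)) with ((P s' z y - P s z y) - (Fz s' z - Fz s z)) by ring.
    eapply Rle_lt_trans; [apply Rabs_triang|]. rewrite Rabs_Ropp. lra. }
  assert (Dd' : forall z s, 0 <= s -> rlim (fun h => (Dd (s + h) z - Dd s z) / h) (Qop lam mu (fun w => Dd s w) z)).
  { intros z s Hs. unfold Dd. rewrite Qop_minus.
    assert (L1 := backward lam mu P HP Hr z y s Hs).
    rewrite Qop_of_qrate in L1.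
    assert (L2 := rlim_of_derive _ _ _ (dF z s)).
    assert (L := rlim_minus _ _ _ _ L1 L2).
    eapply rlim_ext; [|exact L]. intros h hp. cbv beta. field. lra. }
  assert (U1 := uniq_le lam mu Dd Hl Hm D0).
  assert (U2 := uniq_le lam mu (fun s z => - Dd s z) Hl Hm).
  assert (B1 : forall t0, 0 <= t0 -> exists B, forall s z, 0 <= s <= t0 -> Dd s z <= B).
  { intros t0 Ht0. destruct (Fbnd t0 Ht0) as [M HM]. exists (1 + M).
    intros s z Hs. unfold Dd. destruct (HM s z Hs). assert (P s z y <= 1) by (apply Hle1; lra). lra. }
  assert (B2 : forall t0, 0 <= t0 -> exists B, forall s z, 0 <= s <= t0 -> - Dd s z <= B).
  { intros t0 Ht0. destruct (Fbnd t0 Ht0) as [M HM]. exists M.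
    intros s z Hs. unfold Dd. destruct (HM s z Hs). assert (0 <= P s z y) by (apply Hpos; lra). lra. }
  assert (R1 := U1 B1 Dc Dd' t x Ht).
  assert (R2 : - Dd t x <= 0).
  { apply U2.
    - intros z. rewrite D0. ring.
    - exact B2.
    - intros z s Hs eps He. destruct (Dc z s Hs eps He) as [d [d0 Hd]].
      exists d; split; auto. intros s' Hs' Hss.
      replace (- Dd s' z - - Dd s z) with (- (Dd s' z - Dd s z)) by ring.
      rewrite Rabs_Ropp. auto.
    - intros z s Hs.
      rewrite (Qop_ext _ _ _ (fun w => (-1) * Dd s w)) by (intros; ring).
      rewrite Qop_scal.
      assert (L := rlim_scal (-1) _ _ (Dd' z s Hs)).
      eapply rlim_ext; [|exact L]. intros h hp. cbv beta. field. lra.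
    - exact Ht. }
  unfold Dd, Fz in R1, R2. lra.
Qed.
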